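(* Let $G=(V,E,w)$ be an undirected graph without self-loops, with at least two vertices, positive edge weights and conductance $\Phi_G$, and let $\mathcal{T}$ be any HC tree of $G$. Let $(A_0,A_1,\dots,A_k)$, $k\ge 0$, be the dense branch of $\mathcal{T}$, and for $1\le i\le k$ let $B_i$ be the sibling of $A_i$. Then \begin{enumerate} \item $\mathrm{cost}_G(\mathcal{T}) \ge \frac{\Phi_G}{2}\sum_{i=1}^k |A_{i-1}|\cdot\mathrm{vol}(B_i)$; \item $\mathrm{cost}_G(\mathcal{T}) \ge \frac{\Phi_G}{2}\cdot |A_k|\cdot \mathrm{vol}(A_k)$. \end{enumerate}
   Context: $d_u=\sum_v w_{uv}$, $\mathrm{vol}(S)=\sum_{u\in S}d_u$, $\mathrm{vol}(G)=\mathrm{vol}(V)$. Conductance: $\Phi_G(S)=w(S,V\setminus S)/\mathrm{vol}(S)$ and $\Phi_G=\min\{\Phi_G(S):\emptyset\ne S\subset V,\ \mathrm{vol}(S)\le\mathrm{vol}(V)/2\}$. An HC tree is a rooted binary tree whose leaves are in bijection with $V$; each node is identified with the set of vertices at the leaves of its subtree, and $|N|$ denotes the number of such vertices. $\mathrm{cost}_G(\mathcal{T})=\sum_{\{u,v\}\in E}w_{uv}|\mathsf{leaves}(\mathcal{T}[u\vee v])|$ with $u\vee v$ the lowest common ancestor. Dense branch: the path $(A_0,\dots,A_k)$ in $\mathcal{T}$ where $A_0$ is the root, each $A_{i+1}$ is the child of $A_i$ of larger volume, and $A_k$ is the node with $\mathrm{vol}(A_k)>\mathrm{vol}(G)/2$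 both of whose children have volume at most $\mathrm{vol}(G)/2$ (equivalently, the dense branch consists of all nodes of volume $>\mathrm{vol}(G)/2$). *)

(* Defs.v *)
From mathcomp Require Import all_boot all_order all_algebra.
Set Implicit Arguments. Unset Strict Implicit. Unset Printing Implicit Defensive.
Import Order.TTheory GRing.Theory Num.Theory.
Local Open Scope ring_scope.

(* Weighted undirected graph on a finite vertex type V, given by a weight
   function w : V -> V -> R (w u v = 0 means no edge). *)

Section Defs.
Variables (R : realFieldType) (V : finType).

Definition deg (w : V -> V -> R) (u : V) : R := \sum_(v : V) w u v.
Definition vol (w : V -> V -> R) (S : {set V}) : R := \sum_(u in S) deg w u.
Definition volG (w : V -> V -> R) : R := vol w [set: V].
Definition cutw (w : V -> V -> R) (S : {set V}) : R :=
  \sum_(u in S) \sum_(v in ~: S) w u v.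

Definition cond_set (w : V -> V -> R) (S : {set V}) : R := cutw w S / vol w S.
Definition cond_admissible (w : V -> V -> R) (S : {set V}) : bool :=
  [&& S != set0, S \proper [set: V] & vol w S <= volG w / 2%:R].
Definition is_conductance (w : V -> V -> R) (phi : R) : Prop :=
  (exists S, cond_admissible w S /\ phi = cond_set w S) /\
  (forall S, cond_admissible w S -> phi <= cond_set w S).

Inductive hctree : Type := Leaf of V | Node of hctree & hctree.

Fixpoint leaves (t : hctree) : seq V :=
  match t with Leaf x => [:: x] | Node l r => leaves l ++ leaves r end.

Definition is_hc_tree (t : hctree) : Prop := perm_eq (leaves t) (enum V).

(* |N| and vol(N) for a node N (identified with its set of leaves) *)
Definition nleaves (t : hctree) : nat := size (leaves t).
Definition tvol (w : V -> V -> R) (t : hctree) : R := \sum_(x <- leaves t) deg w x.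

Fixpoint lca_size (t : hctree) (u v : V) : nat :=
  match t with
  | Leaf _ => 1%N
  | Node l r =>
      if (u \in leaves l) && (v \in leaves l) then lca_size l u v
      else if (u \in leaves r) && (v \in leaves r) then lca_size r u v
      else size (leaves t)
  end.

(* cost_G(T) = sum over edges {u,v} of w_uv |leaves(T[u v v])|, written as
   half the sum over ordered pairs of distinct vertices *)
Definition cost (w : V -> V -> R) (t : hctree) : R :=
  2%:R^-1 * \sum_(u : V) \sum_(v : V | v != u) w u v * (lca_size t u v)%:R.

Fixpoint dense_branch (w : V -> V -> R) (t : hctree) : seq hctree :=
  if volG w / 2%:R < tvol w t then
    t :: match t with
         | Leaf _ => [::]
         | Node l r => if tvol w r <= tvol w l then dense_branch w l
                       else dense_branch w r
         end
  else [::].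

End Defs.

(* Main.v *)
Require Import Defs.
From mathcomp Require Import all_boot all_order all_algebra.
From mathcomp Require Import lra.
Import Order.TTheory GRing.Theory Num.Theory.
Local Open Scope ring_scope.

Set Implicit Arguments.

Section Trees.
Variable V : finType.

Fixpoint subt (s t : hctree V) : Prop :=
  s = t \/ match t with Leaf _ => False | Node l r => subt s l \/ subt s r end.

Lemma subt_refl t : subt t t.
Proof. by case: t => [x|l r] /=; left. Qed.

Lemma subt_trans {a b c : hctree V} : subt a b -> subt b c -> subt a c.
Proof.
elim: c => [x|l IHl r IHr] /= Hab.
  by case=> // Eb; move: Hab; rewrite Eb.
case=> [Eb|[Hl|Hr]].
- by move: Hab; rewrite Eb.
- by right; left; apply: IHl.
- by right; right; apply: IHr.
Qed.

Lemma subt_leaves {s t : hctree V} : subt s t -> {subset leaves s <= leaves t}.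
Proof.
elim: t => [x|l IHl r IHr] /=; first by case=> // -> .
case=> [->//|[H|H]] u Hu; rewrite mem_cat.
  by rewrite (IHl H u Hu).
by rewrite (IHr H u Hu) orbT.
Qed.

Lemma subt_size {s t : hctree V} : subt s t -> (size (leaves s) <= size (leaves t))%N.
Proof.
elim: t => [x|l IHl r IHr] /=; first by case=> // ->.
case=> [->//|[H|H]]; rewrite size_cat.
  exact: leq_trans (IHl H) (leq_addr _ _).
exact: leq_trans (IHr H) (leq_addl _ _).
Qed.

Lemma subt_uniq {s t : hctree V} : subt s t -> uniq (leaves t) -> uniq (leaves s).
Proof.
elim: t => [x|l IHl r IHr] /=; first by case=> // ->.
case=> [->//|[H|H]]; rewrite cat_uniq => /and3P [U1 _ U2].
  exact: IHl.
exact: IHr.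
Qed.

Lemma leaves_nil (t : hctree V) : (0 < size (leaves t))%N.
Proof. by elim: t => [x|l IHl r IHr] //=; rewrite size_cat addn_gt0 IHl. Qed.

Lemma leaves_ex (t : hctree V) : exists x, x \in leaves t.
Proof.
have := leaves_nil t; case: (leaves t) => [|x s] //= _; exists x.
by rewrite inE eqxx.
Qed.

Lemma lca_ge1 (t : hctree V) u v : (1 <= lca_size t u v)%N.
Proof.
elim: t => [x|l IHl r IHr] //=.
case: ifP => _ //; case: ifP => _ //.
by rewrite size_cat addn_gt0 leaves_nil.
Qed.

Lemma disj_cat {l r : seq V} {u} : uniq (l ++ r) -> u \in l -> u \in r -> False.
Proof.
rewrite cat_uniq => /and3P [_ /hasPn H _] ul ur.
by move: (H u ur); rewrite ul.
Qed.

Lemma lca_ge (t : hctree V) : uniq (leaves t) -> forall x y, subt (Node x y) t ->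
  forall u v, ((u \in leaves x) && (v \notin leaves x))
              || ((u \in leaves y) && (v \notin leaves y)) ->
  (size (leaves (Node x y)) <= lca_size t u v)%N.
Proof.
elim: t => [z|l IHl r IHr] /= U x y; first by case.
have Ul : uniq (leaves l) by move: U; rewrite cat_uniq => /and3P [].
have Ur : uniq (leaves r) by move: U; rewrite cat_uniq => /and3P [].
move=> Hs u v H.
case: Hs => [[El Er]|[Hs|Hs]]; first subst x y.
- case/orP: H => /andP [Hu1 Hv1].
  rewrite (negbTE Hv1) andbF.
    case: ifP => [/andP [Hu2 _]|_ //]; by case: (disj_cat U Hu1 Hu2).
  case: ifP => [/andP [Hu2 _]|_]; first by case: (disj_cat U Hu2 Hu1).
  by rewrite (negbTE Hv1) andbF.
- have Hul : u \in leaves l.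
    by apply: (subt_leaves Hs u); rewrite /= mem_cat; case/orP: H => /andP [-> _] //; rewrite orbT.
  case: ifP => [/andP [_ Hv]|_]; first exact: IHl.
  case: ifP => [/andP [Hur _]|_]; first by case: (disj_cat U Hul Hur).
  apply: (leq_trans (subt_size Hs)); rewrite size_cat; exact: leq_addr.
- have Hur : u \in leaves r.
    by apply: (subt_leaves Hs u); rewrite /= mem_cat; case/orP: H => /andP [-> _] //; rewrite orbT.
  case: ifP => [/andP [Hul _]|_]; first by case: (disj_cat U Hul Hur).
  case: ifP => [/andP [_ Hv]|_]; first exact: IHr.
  apply: (leq_trans (subt_size Hs)); rewrite size_cat; exact: leq_addl.
Qed.

End Trees.

Section DB.
Variables (R : realFieldType) (V : finType) (w : V -> V -> R).

Definition dnext (t : hctree V) : hctree V :=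
  match t with Leaf _ => t
  | Node l r => if tvol w r <= tvol w l then l else r end.

Lemma subt_next t : subt (dnext t) t.
Proof.
case: t => [x|l r] /=; first by left.
by right; case: ifP => _; [left|right]; exact: subt_refl.
Qed.

Lemma db_eq t : dense_branch w t =
  if volG w / 2%:R < tvol w t then
    t :: match t with Leaf _ => [::] | Node _ _ => dense_branch w (dnext t) end
  else [::].
Proof. by case: t => [x|l r] //=; case: (tvol w r <= tvol w l). Qed.

Lemma db_drop d {i t} : (i < size (dense_branch w t))%N ->
  dense_branch w (nth d (dense_branch w t) i) = drop i (dense_branch w t).
Proof.
elim: i t => [|i IH] t.
  rewrite drop0 [dense_branch w t]db_eq; case: ifP => // Hc _ /=.
  by rewrite db_eq Hc.
rewrite [dense_branch w t]db_eq; case: ifP => // Hc.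
case: t Hc => [x|l r] Hc //= H.
exact: IH.
Qed.

Lemma db_head d t : (0 < size (dense_branch w t))%N ->
  nth d (dense_branch w t) 0 = t.
Proof. by rewrite db_eq; case: ifP. Qed.

Lemma db_gt d {t i} : (i < size (dense_branch w t))%N ->
  volG w / 2%:R < tvol w (nth d (dense_branch w t) i).
Proof.
move=> H; have E := db_drop d H.
have : (0 < size (dense_branch w (nth d (dense_branch w t) i)))%N.
  by rewrite E size_drop subn_gt0.
by rewrite db_eq; case: ifP.
Qed.

Lemma db_tail d {t i} : (i < size (dense_branch w t))%N ->
  drop i.+1 (dense_branch w t) =
  match nth d (dense_branch w t) i with Leaf _ => [::]
  | Node _ _ => dense_branch w (dnext (nth d (dense_branch w t) i)) end.
Proof.
move=> H; have E := db_drop d H.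
rewrite (drop_nth d H) db_eq in E.
by move: E; case: ifP => // _ [->].
Qed.

Lemma db_next d {t i} : (i.+1 < size (dense_branch w t))%N ->
  nth d (dense_branch w t) i.+1 = dnext (nth d (dense_branch w t) i).
Proof.
move=> H; have H' := ltnW H.
have Hs : (0 < size (drop i.+1 (dense_branch w t)))%N by rewrite size_drop subn_gt0.
rewrite -[i.+1]addn0 -nth_drop.
move: Hs; rewrite (db_tail d H').
case: (nth d (dense_branch w t) i) => [x|l r] //= Hs.
exact: db_head.
Qed.

Lemma db_last d {t i l r} : i.+1 = size (dense_branch w t) ->
  nth d (dense_branch w t) i = Node l r ->
  tvol w (dnext (Node l r)) <= volG w / 2%:R.
Proof.
move=> H E.
have H' : (i < size (dense_branch w t))%N by rewrite H.
have := db_tail d H'; rewrite E drop_oversize ?H //.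
rewrite db_eq; case: ifP => // Hc _.
by rewrite leNgt Hc.
Qed.

Lemma db_sub d {t i} : (i < size (dense_branch w t))%N ->
  subt (nth d (dense_branch w t) i) t.
Proof.
elim: i => [|i IH] H; first by rewrite db_head //; exact: subt_refl.
rewrite db_next //; apply: subt_trans (subt_next _) (IH (ltnW H)).
Qed.

Lemma tvol_node l r : tvol w (Node l r) = tvol w l + tvol w r.
Proof. by rewrite /tvol /= big_cat. Qed.

Lemma next_max x y : tvol w x <= tvol w (dnext (Node x y)) /\
                     tvol w y <= tvol w (dnext (Node x y)).
Proof.
rewrite /dnext; case: ifP => H; split => //.
by rewrite ltW // ltNge H.
Qed.

End DB.
Arguments dnext {R V} w t.
Arguments subt_next {R V} w t.
Arguments db_eq {R V} w t.
Arguments db_drop {R V} w d {i t}.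
Arguments db_head {R V} w d t.
Arguments db_gt {R V} w d {t i}.
Arguments db_tail {R V} w d {t i}.
Arguments db_next {R V} w d {t i}.
Arguments db_last {R V} w d {t i l r}.
Arguments db_sub {R V} w d {t i}.
Arguments tvol_node {R V} w l r.
Arguments next_max {R V} w x y.

Section Sums.
Variables (R : realFieldType) (V : finType) (w : V -> V -> R).
Hypothesis w0 : forall u, w u u = 0.
Hypothesis wnn : forall u v, 0 <= w u v.

Lemma deg_ge0 u : 0 <= deg w u.
Proof. by apply: sumr_ge0 => v _. Qed.

Lemma vol_ge0 S : 0 <= vol w S.
Proof. by apply: sumr_ge0 => v _; exact: deg_ge0. Qed.

Lemma tvol_ge0 (t : hctree V) : 0 <= tvol w t.
Proof. by apply: sumr_ge0 => v _; exact: deg_ge0. Qed.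

Lemma tvol_vol (t : hctree V) : uniq (leaves t) ->
  tvol w t = vol w [set x | x \in leaves t].
Proof.
move=> U; rewrite /tvol /vol big_uniq //.
by apply: eq_bigl => x; rewrite inE.
Qed.

Lemma vol_le S : vol w S <= volG w.
Proof.
rewrite /volG /vol [X in X <= _]big_mkcond [X in _ <= X]big_mkcond.
apply: ler_sum => u _; rewrite in_setT; case: ifP => // _; exact: deg_ge0.
Qed.

Lemma tvol_le (t : hctree V) : uniq (leaves t) -> tvol w t <= volG w.
Proof. by move=> U; rewrite tvol_vol //; exact: vol_le. Qed.

Lemma cut_expand S : cutw w S =
  \sum_u \sum_v (if (u \in S) && (v \notin S) then w u v else 0).
Proof.
rewrite /cutw big_mkcond; apply: eq_bigr => u _; rewrite big_mkcond /=.
case: (u \in S) => /=.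
  by apply: eq_bigr => v _; rewrite in_setC.
by rewrite big1.
Qed.

Lemma cut_le_vol S : cutw w S <= vol w S.
Proof.
rewrite cut_expand /vol [X in _ <= X]big_mkcond; apply: ler_sum => u _.
case: (u \in S) => /=; last by rewrite big1.
rewrite /deg; apply: ler_sum => v _; case: ifP => // _; exact: wnn.
Qed.

Lemma cut_ge0 S : 0 <= cutw w S.
Proof. by rewrite cut_expand; apply: sumr_ge0 => u _; apply: sumr_ge0 => v _; case: ifP. Qed.

Lemma phi_le phi S : is_conductance w phi -> cond_admissible w S ->
  phi * vol w S <= cutw w S.
Proof.
case=> _ Hmin H; have := Hmin S H; rewrite /cond_set.
have := vol_ge0 S; rewrite le0r => /orP [/eqP ->|Hp].
  by rewrite mulr0 => _; exact: cut_ge0.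
by rewrite ler_pdivlMr.
Qed.

Lemma phi_le1 phi : is_conductance w phi -> phi <= 1.
Proof.
case=> [[S [_ ->]] _]; rewrite /cond_set.
have := vol_ge0 S; rewrite le0r => /orP [/eqP ->|Hp].
  by rewrite invr0 mulr0.
by rewrite ler_pdivrMr // mul1r cut_le_vol.
Qed.

Lemma cost_eq (T : hctree V) : cost w T =
  2%:R^-1 * \sum_u \sum_v w u v * (lca_size T u v)%:R.
Proof.
rewrite /cost; congr (_ * _); apply: eq_bigr => u _.
by rewrite [in RHS](bigD1 u) //= w0 mul0r add0r.
Qed.

Lemma fam_bound (I : eqType) (r : seq I) (S : I -> {set V}) (c : I -> R)
    (L : V -> V -> R) :
  uniq r -> (forall j, j \in r -> 0 <= c j) -> (forall u v, 0 <= L u v) ->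
  (forall j j' u, j \in r -> j' \in r -> u \in S j -> u \in S j' -> j = j') ->
  (forall j u v, j \in r -> u \in S j -> v \notin S j -> c j <= L u v) ->
  \sum_(j <- r) c j * cutw w (S j) <= \sum_u \sum_v w u v * L u v.
Proof.
move=> Ur Hc HL Hdis Hb.
under eq_bigr => j _ do rewrite cut_expand mulr_sumr.
rewrite exchange_big /=; apply: ler_sum => u _.
under eq_bigr => j _ do rewrite mulr_sumr.
rewrite exchange_big /=; apply: ler_sum => v _.
have -> : \sum_(j <- r) c j * (if (u \in S j) && (v \notin S j) then w u v else 0)
  = w u v * \sum_(j <- r) (if (u \in S j) && (v \notin S j) then c j else 0).
  rewrite mulr_sumr; apply: eq_bigr => j _.
  by case: ifP; rewrite ?mulr0 // mulrC.
apply: ler_wpM2l; first exact: wnn.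
case: (boolP (has (fun j => (u \in S j) && (v \notin S j)) r)).
  case/hasP => j0 Hj0 /andP [Hu Hv].
  rewrite (bigD1_seq j0) //= Hu Hv /= big_seq_cond big1 ?addr0; first exact: Hb.
  move=> j /andP [Ej Hj]; case: ifP => // /andP [Hu' _].
  by move: Hj; rewrite (Hdis _ _ _ Ej Hj0 Hu' Hu) eqxx.
move/hasPn => Hn; rewrite big_seq big1 //.
move=> j Hj; by rewrite (negbTE (Hn j Hj)).
Qed.

End Sums.
Arguments deg_ge0 {R V}.
Arguments vol_ge0 {R V}.
Arguments tvol_ge0 {R V}.
Arguments tvol_vol {R V}.
Arguments vol_le {R V}.
Arguments tvol_le {R V}.
Arguments cut_expand {R V}.
Arguments cut_le_vol {R V}.
Arguments cut_ge0 {R V}.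
Arguments phi_le {R V}.
Arguments phi_le1 {R V}.
Arguments cost_eq {R V}.
Arguments fam_bound {R V}.
Unset Implicit Arguments.

Theorem mainTheorem4 (R : realFieldType) (V : finType) (w : V -> V -> R)
    (phi : R) (T : hctree V) (k : nat) (A B : nat -> hctree V) :
  (1 < #|V|)%N ->
  (forall u, w u u = 0) ->
  (forall u v, w u v = w v u) ->
  (forall u v, 0 <= w u v) ->
  is_conductance w phi ->
  is_hc_tree T ->
  dense_branch w T = mkseq A k.+1 ->
  (forall i, (1 <= i <= k)%N ->
     A i.-1 = Node (A i) (B i) \/ A i.-1 = Node (B i) (A i)) ->
  phi / 2%:R * \sum_(1 <= i < k.+1) (nleaves (A i.-1))%:R * tvol w (B i)
    <= cost w T
  /\ phi / 2%:R * (nleaves (A k))%:R * tvol w (A k) <= cost w T.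
Proof.
move=> HV w0 wsym wnn Hphi HT Hdb HB.
have Hsz : size (dense_branch w T) = k.+1 by rewrite Hdb size_mkseq.
have HA : forall i, (i <= k)%N -> A i = nth T (dense_branch w T) i.
  by move=> i Hi; rewrite Hdb nth_mkseq.
have UT : uniq (leaves T) by rewrite (perm_uniq HT) enum_uniq.
have Asub : forall i, (i <= k)%N -> subt (A i) T.
  by move=> i Hi; rewrite HA //; apply: db_sub; rewrite Hsz.
have UA : forall i, (i <= k)%N -> uniq (leaves (A i)).
  by move=> i Hi; exact: subt_uniq (Asub i Hi) UT.
have Anext : forall i, (i < k)%N -> A i.+1 = dnext w (A i).
  by move=> i Hi; rewrite !HA // ?(ltnW Hi) //; apply: db_next; rewrite Hsz.
have Achain : forall i j, (i <= j)%N -> (j <= k)%N -> subt (A j) (A i).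
  move=> i j; elim: j => [|j IH].
    by rewrite leqn0 => /eqP -> _; exact: subt_refl.
  rewrite leq_eqVlt => /orP [/eqP <-|Hlt] Hjk; first exact: subt_refl.
  rewrite Anext //; apply: subt_trans (IH Hlt (ltnW Hjk)).
  exact: subt_next.
have Bf : forall i, (1 <= i <= k)%N ->
   [/\ uniq (leaves (B i)),
        (forall u, u \in leaves (B i) -> u \in leaves (A i) -> False),
        tvol w (B i) <= tvol w (A i),
        tvol w (A i.-1) = tvol w (A i) + tvol w (B i) &
        {subset leaves (B i) <= leaves (A i.-1)}].
  move=> i Hi; case/andP: (Hi) => H1 Hk.
  have Hk' : (i.-1 <= k)%N by rewrite (leq_trans (leq_pred i) Hk).
  have Ui := UA i.-1 Hk'.
  have En : A i = dnext w (A i.-1) by rewrite -(Anext i.-1) ?prednK // (leq_trans _ Hk) // ltn_predL.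
  case: (HB i Hi) => E; rewrite E in Ui En *.
  - move: Ui => /= Ui; split.
    + by move: Ui; rewrite cat_uniq => /and3P [].
    + by move=> u Hb Ha; exact: disj_cat Ui Ha Hb.
    + by rewrite En; exact: (next_max w (A i) (B i)).2.
    + by rewrite tvol_node.
    + by move=> u Hu; rewrite /= mem_cat Hu orbT.
  - move: Ui => /= Ui; split.
    + by move: Ui; rewrite cat_uniq => /and3P [].
    + by move=> u Hb Ha; exact: disj_cat Ui Hb Ha.
    + by rewrite En; exact: (next_max w (B i) (A i)).1.
    + by rewrite tvol_node addrC.
    + by move=> u Hu; rewrite /= mem_cat Hu.
have key : forall i j u, (1 <= i <= k)%N -> (1 <= j <= k)%N -> (i < j)%N ->
    u \in leaves (B i) -> u \in leaves (B j) -> False.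
  move=> i j u Hi Hj Hij Hui Huj.
  have [_ Hd _ _ _] := Bf i Hi.
  have [_ _ _ _ Hs] := Bf j Hj.
  apply: (Hd u Hui); apply: (subt_leaves (Achain i j.-1 _ _)).
  - by rewrite -ltnS prednK // (leq_ltn_trans _ Hij).
  - by case/andP: Hj => _ Hj; rewrite (leq_trans (leq_pred j) Hj).
  - exact: Hs.
have Bdis : forall i j u, (1 <= i <= k)%N -> (1 <= j <= k)%N ->
    u \in leaves (B i) -> u \in leaves (B j) -> i = j.
  move=> i j u Hi Hj Hui Huj; case: (ltngtP i j) => // H.
    by case: (key i j u Hi Hj H Hui Huj).
  by case: (key j i u Hj Hi H Huj Hui).
have adm : forall (X Y : hctree V), uniq (leaves X) ->
    (forall u, u \in leaves X -> u \in leaves Y -> False) ->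
    tvol w X <= volG w / 2%:R ->
    cond_admissible w [set x | x \in leaves X].
  move=> X Y UX HXY HvX; apply/and3P; split.
  - have [x Hx] := leaves_ex X; apply/set0Pn; exists x; by rewrite inE.
  - rewrite properT; apply/negP => /eqP E.
    have [y Hy] := leaves_ex Y.
    have : y \in [set x | x \in leaves X] by rewrite E in_setT.
    by rewrite inE => Hx; exact: HXY y Hx Hy.
  - by rewrite -tvol_vol.
have bnd : forall X l r u v, subt (Node l r) T ->
    ((u \in leaves l) && (v \notin leaves l)) || ((u \in leaves r) && (v \notin leaves r)) ->
    X = Node l r ->
    (nleaves X)%:R <= (lca_size T u v)%:R :> R.
  move=> X l r u v Hs H ->; rewrite ler_nat; exact: lca_ge _ UT _ _ Hs _ _ H.
have half : forall (x y z : R), x * y <= z -> x / 2%:R * y <= 2%:R^-1 * z.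
  move=> x y z H; rewrite mulrAC mulrC; apply: ler_wpM2l => //.
  by rewrite invr_ge0 ler0n.
split.
  rewrite (cost_eq w w0 T); apply: half.
  apply: le_trans _ (fam_bound w wnn _ (index_iota 1 k.+1)
     (fun i => [set x | x \in leaves (B i)]) (fun i => (nleaves (A i.-1))%:R)
     (fun u v => (lca_size T u v)%:R) _ _ _ _ _).
  - rewrite mulr_sumr big_seq [X in _ <= X]big_seq; apply: ler_sum => i Hi.
    rewrite mulrCA; apply: ler_wpM2l; first exact: ler0n.
    rewrite mem_index_iota ltnS in Hi.
    have [UB HdB HvB Hsum _] := Bf i Hi.
    rewrite (tvol_vol w (B i) UB); apply: (phi_le w wnn phi _ Hphi).
    apply: (adm _ (A i)) => //.
    have Hk' : (i.-1 <= k)%N.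
      by case/andP: Hi => _ Hk; rewrite (leq_trans (leq_pred i) Hk).
    have := tvol_le w wnn (A i.-1) (UA _ Hk'); rewrite Hsum => H.
    lra.
  - by rewrite /index_iota; exact: iota_uniq.
  - by move=> j _; exact: ler0n.
  - by move=> u v; exact: ler0n.
  - move=> j j' u; rewrite !mem_index_iota !ltnS !inE; exact: Bdis.
  - move=> j u v; rewrite mem_index_iota ltnS !inE => Hj Hu Hv.
    have Hk' : (j.-1 <= k)%N.
      by case/andP: Hj => _ Hk; rewrite (leq_trans (leq_pred j) Hk).
    have Hs := Asub _ Hk'.
    case: (HB j Hj) => E; rewrite E in Hs.
    + by apply: (bnd _ _ _ _ _ Hs) => //; rewrite Hu Hv orbT.
    + by apply: (bnd _ _ _ _ _ Hs) => //; rewrite Hu Hv.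
rewrite (cost_eq w w0 T).
have Uk := UA k (leqnn k); have Sk := Asub k (leqnn k).
have HAk := HA k (leqnn k).
case E: (A k) Uk Sk HAk => [x|l r] Uk Sk HAk.
  have -> : (nleaves (Leaf x))%:R = 1 :> R by [].
  rewrite mulr1 /tvol /= big_seq1; apply: half.
  have Hp := phi_le1 w wnn phi Hphi.
  have Hd : deg w x <= \sum_u \sum_v w u v * (lca_size T u v)%:R.
    rewrite (bigD1 x) //=.
    apply: le_trans (_ : _ <= \sum_v w x v * (lca_size T x v)%:R) _.
      rewrite /deg; apply: ler_sum => v _.
      rewrite -{1}(mulr1 (w x v)); apply: ler_wpM2l; first exact: wnn.
      by rewrite ler1n lca_ge1.
    rewrite lerDl; apply: sumr_ge0 => u _; apply: sumr_ge0 => v _.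
    by apply: mulr_ge0; [exact: wnn | exact: ler0n].
  apply: le_trans Hd; rewrite -{2}(mul1r (deg w x)); apply: ler_wpM2r => //.
  exact: deg_ge0.
have hlast : tvol w (dnext w (Node l r)) <= volG w / 2%:R.
  by apply: (db_last w T (esym Hsz)); rewrite -HAk.
have [Hl Hr] := next_max w l r.
move: Uk => /= Uk.
have Ul : uniq (leaves l) by move: Uk; rewrite cat_uniq => /and3P [].
have Ur : uniq (leaves r) by move: Uk; rewrite cat_uniq => /and3P [].
have Dlr : forall u, u \in leaves l -> u \in leaves r -> False.
  by move=> u a b; exact: disj_cat Uk a b.
have Al : cond_admissible w [set y | y \in leaves l].
  apply: (adm l r Ul Dlr); exact: le_trans Hl hlast.
have Ar : cond_admissible w [set y | y \in leaves r].
  apply: (adm r l Ur (fun u a b => Dlr u b a)); exact: le_trans Hr hlast.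
rewrite -mulrA; apply: half.
apply: le_trans _ (fam_bound w wnn _ [:: true; false]
   (fun b => if b then [set y | y \in leaves l] else [set y | y \in leaves r])
   (fun _ => (nleaves (Node l r))%:R) (fun u v => (lca_size T u v)%:R) _ _ _ _ _).
- rewrite !big_cons big_nil addr0 /= tvol_node.
  rewrite mulrCA -mulrDr; apply: ler_wpM2l; first exact: ler0n.
  rewrite mulrDr.
  apply: lerD.
    rewrite (tvol_vol w l Ul); exact: (phi_le w wnn phi _ Hphi Al).
  rewrite (tvol_vol w r Ur); exact: (phi_le w wnn phi _ Hphi Ar).
- by [].
- by move=> j _; exact: ler0n.
- by move=> u v; exact: ler0n.
- move=> [] [] u _ _ //=; rewrite !inE => a b.
    by case: (Dlr u a b).
  by case: (Dlr u b a).
- move=> [] u v _ /=; rewrite !inE => Hu Hv.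
    by apply: (bnd _ _ _ _ _ Sk) => //; rewrite Hu Hv.
  by apply: (bnd _ _ _ _ _ Sk) => //; rewrite Hu Hv orbT.
Qed.
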